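(* Let $\mathcal G=(\mathcal V,\mathcal E)$ be a hypergraph with $\mathcal V=[n]$, all of whose edges are nonempty, with special vertices $\mathcal V^{\mathrm{sp}}$, and let $\mathbf m\in\mathbb Z_{\ge0}^n$. Then, as polynomials in $q$ (equivalently, for every positive integer $q$), \[ {}_{\mathbf m}\Pi^{\mathrm{mark}}_{\mathcal G}(q)=\sum_{\underline{\boldsymbol\lambda}\in S(\mathbf m)}\frac{\Pi_{\mathcal G(\underline{\boldsymbol\lambda},\mathbf m)}(q)}{\prod_{i\in\mathrm{supp}(\mathbf m)}\prod_{k\ge1}\bigl(d_k^{\boldsymbol\lambda_i}\bigr)!}. \]
   Context: Hypergraph, special vertices $\mathcal V^{\mathrm{sp}}\subseteq\mathcal V=[n]$, and ${}_{\mathbf m}\Pi^{\mathrm{mark}}_{\mathcal G}(q)$: for $q\in\mathbb N$, the number of maps $\Gamma$ assigning to each vertex $v$ a finite multiset $\Gamma(v)$ of elements of $\{1,\dots,q\}$ with $\Gamma(v)$ a set for $v\notin\mathcal V^{\mathrm{sp}}$, $|\Gamma(v)|=m_v$ (with multiplicity), and, for each edge $e$, the underlying sets of $\Gamma(v)$, $v\in e$, having empty common intersection. For a hypergraph $\mathcal H$, $\Pi_{\mathcal H}(q)$ is its ordinary chromatic polynomial: the number of maps $c$ from the vertex set to $\{1,\dots,q\}$ such that no edge is monochromatic (i.e. for each edge $e$, $c$ is not constant on $e$). A partition $\lambda$ of $m$ is a weakly decreasing tuple of positive integers summing to $m$; $\ell(\lambda)$ is its number of parts and $d_k^\lambda$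 the number of parts equal to $k$; the empty partition of $0$ has length $0$. $S(\mathbf m)$ is the set of tuples $\underline{\boldsymbol\lambda}=(\boldsymbol\lambda_i)_{i\in[n]}$ with $\boldsymbol\lambda_i$ a partition of $m_i$ and $\boldsymbol\lambda_i=(1^{m_i})$ for $i\notin\mathcal V^{\mathrm{sp}}$. For $\underline{\boldsymbol\lambda}\in S(\mathbf m)$, $\mathcal G(\underline{\boldsymbol\lambda},\mathbf m)$ is the hypergraph with vertex set $\{(i,r): i\in\mathrm{supp}(\mathbf m),\ 1\le r\le\ell(\boldsymbol\lambda_i)\}$ and edges: (a) $\{(i,r),(i,s)\}$ for each $i\in\mathrm{supp}(\mathbf m)$ and $1\le r<s\le\ell(\boldsymbol\lambda_i)$ (each vertex $i$ is replaced by a clique of size $\ell(\boldsymbol\lambda_i)$); (b) for each edge $\{i_1,\dots,i_k\}\in\mathcal E$ contained in $\mathrm{supp}(\mathbf m)$ and each choice $1\le r_j\le\ell(\boldsymbol\lambda_{i_j})$, the edge $\{(i_1,r_1),\dots,(i_k,r_k)\}$. *)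

(* Defs.v *)
From HB Require Import structures.
From mathcomp Require Import all_boot all_order all_algebra.
Set Implicit Arguments. Unset Strict Implicit. Unset Printing Implicit Defensive.

(* total multiplicity; every count/part/length below is bounded by it *)
Definition msum n (m : 'I_n -> nat) : nat := \sum_(i < n) m i.

(* A finite multiset of colours in {1..q} ('I_q) is represented by its
   multiplicity function G v : 'I_q -> nat; since |Gamma(v)| = m v <= msum m,
   multiplicities fit in 'I_(msum m).+1. *)
Definition marked_count n (E : {set {set 'I_n}}) (sp : {set 'I_n})
    (m : 'I_n -> nat) (q : nat) : nat :=
  #|[pred G : {ffun 'I_n -> {ffun 'I_q -> 'I_(msum m).+1}} |
     [&& [forall v, \sum_(c < q) (G v c : nat) == m v],
         [forall v, (v \notin sp) ==> [forall c, (G v c : nat) <= 1]] &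
         [forall e in E, ~~ [exists c, [forall v in e, 0 < (G v c : nat)]]]]]|.

Definition chrom_count (V : finType) (F : {set {set V}}) (q : nat) : nat :=
  #|[pred c : {ffun V -> 'I_q} |
     [forall e in F, [exists x in e, exists y in e, c x != c y]]]|.

Definition is_partition (k : nat) (s : seq nat) : bool :=
  [&& sorted geq s, all (fun x => 0 < x) s & sumn s == k].

(* tuples of partitions (lambda_i)_i; lambda_i is a partition of m i, so it has
   length <= msum m and parts <= msum m *)
Definition lamT n (m : 'I_n -> nat) : finType :=
  {ffun 'I_n -> (msum m).-bseq 'I_(msum m).+1}.

Definition pseq n (m : 'I_n -> nat) (lam : lamT m) (i : 'I_n) : seq nat :=
  [seq nat_of_ord x | x <- (lam i : seq _)].

Definition in_S n (sp : {set 'I_n}) (m : 'I_n -> nat) (lam : lamT m) : bool :=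
  [forall i, is_partition (m i) (pseq lam i) &&
             ((i \notin sp) ==> (pseq lam i == nseq (m i) 1))].

(* vertices (i, r) of G(lam, m), with i in supp m and r < length(lam_i)
   (r is 0-indexed here, i.e. r stands for r+1 in the paper) *)
Definition Gvert n (m : 'I_n -> nat) (lam : lamT m) : predArgType :=
  {x : 'I_n * 'I_(msum m) | (0 < m x.1) && (x.2 < size (lam x.1))}.

Definition Gedges n (E : {set {set 'I_n}}) (m : 'I_n -> nat) (lam : lamT m)
    : {set {set Gvert lam}} :=
  [set A : {set Gvert lam} |
     [exists x : Gvert lam, exists y : Gvert lam,
        [&& (val x).1 == (val y).1, x != y & A == [set x; y]]]
     || [exists e in E,
        [&& [forall i in e, 0 < m i],
            [forall x in A, (val x).1 \in e] &
            [forall i in e, #|[set x in A | (val x).1 == i]| == 1]]]].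

(* Main.v *)
Require Import Defs.
From HB Require Import structures.
From mathcomp Require Import all_boot all_order all_algebra.
Set Implicit Arguments. Unset Strict Implicit. Unset Printing Implicit Defensive.

Definition FA (X Y K : finType) (y0 : Y) (cls : X -> K) (C : K -> {set Y})
  (A : {set X}) : {set {ffun X -> Y}} :=
  [set f : {ffun X -> Y} |
    [forall x, if x \in A then f x \in C (cls x) else f x == y0] &&
    [forall x in A, forall y in A, (cls x == cls y) && (f x == f y) ==> (x == y)]].

Lemma FA_card (X Y K : finType) (y0 : Y) (cls : X -> K) (C : K -> {set Y})
  (k : nat) (A : {set X}) : #|A| = k ->
  #|FA y0 cls C A| = \prod_(c : K) #|C c| ^_ #|[set x in A | cls x == c]|.
Proof.
elim: k A => [|k IH] A hA.
  have -> : A = set0 by apply/eqP; rewrite -cards_eq0 hA.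
  have -> : FA y0 cls C set0 = [set [ffun => y0]].
    apply/setP => f; rewrite !inE; apply/andP/eqP.
      move=> [/forallP h _]; apply/ffunP => x; rewrite ffunE.
      by have := h x; rewrite inE => /eqP.
    move=> ->; split; apply/forallP => x; first by rewrite inE ffunE.
    by rewrite inE.
  rewrite cards1 big1 // => c _.
  have -> : [set x in set0 | cls x == c] = set0 by apply/setP => x; rewrite !inE.
  by rewrite cards0 ffactn0.
have : 0 < #|A| by rewrite hA.
case/card_gt0P => a aA.
set B := A :\ a.
have hB : #|B| = k by move: hA; rewrite (cardsD1 a A) aA add1n => -[].
have aB : a \notin B by rewrite !inE eqxx.
have AB : A = a |: B by rewrite setD1K.
pose r (f : {ffun X -> Y}) : {ffun X -> Y} := [ffun x => if x == a then y0 else f x].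
pose upd (h : {ffun X -> Y}) v : {ffun X -> Y} := [ffun x => if x == a then v else h x].
pose S := [set x in B | cls x == cls a].
have rFA : forall f, f \in FA y0 cls C A -> r f \in FA y0 cls C B.
  move=> f; rewrite !inE => /andP[/forallP h1 /forallP h2]; apply/andP; split.
    apply/forallP => x; rewrite ffunE !inE.
    case: eqP => [->|xa]; first by rewrite eqxx.
    by have := h1 x; rewrite AB !inE; move/eqP: xa => /negbTE ->.
  apply/forallP => x; apply/implyP; rewrite !inE => /andP[xa xA].
  apply/forallP => y; apply/implyP; rewrite !inE => /andP[ya yA].
  rewrite !ffunE (negbTE xa) (negbTE ya).
  by have /forallP := implyP (h2 x) xA => /(_ y) /implyP; apply.
have fib : forall h, h \in FA y0 cls C B ->
    [set f in FA y0 cls C A | r f == h] = upd h @: (C (cls a) :\: h @: S).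
  move=> h hh; have hh' := hh; move: hh'; rewrite inE => /andP[/forallP h1 /forallP h2].
  apply/setP => f; rewrite inE; apply/andP/imsetP.
    move=> [fA /eqP rf]; exists (f a).
      move: fA; rewrite inE => /andP[/forallP g1 /forallP g2].
      rewrite !inE; apply/andP; split; last by have := g1 a; rewrite aA.
      apply/imsetP => -[x]; rewrite !inE => /andP[/andP[xa xA] cx] fx.
      have : h x = f x by rewrite -rf ffunE (negbTE xa).
      move=> hx; rewrite hx in fx.
      have := implyP (g2 x) xA => /forallP /(_ a) /implyP /(_ aA).
      by rewrite cx fx !eqxx (negbTE xa).
    apply/ffunP => x; rewrite ffunE; case: eqP => [->//|/eqP xa].
    by rewrite -rf ffunE (negbTE xa).
  move=> [v]; rewrite !inE => /andP[vS vC] ->; split; last first.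
    apply/eqP/ffunP => x; rewrite !ffunE; case: eqP => [->|//].
    by have := h1 a; rewrite (negbTE aB) => /eqP.
  apply/andP; split.
    apply/forallP => x; rewrite ffunE; case: eqP => [->|/eqP xa]; first by rewrite aA.
    by have := h1 x; rewrite AB !inE (negbTE xa).
  have inj : forall x y, x \in A -> y \in A -> x != a -> y == a ->
      cls x == cls y -> upd h v x == upd h v y -> x == y.
    move=> x y xA yA xa /eqP ya cxy; rewrite ya in cxy *; rewrite !ffunE (negbTE xa) eqxx => /eqP hx.
    exfalso; move/negP: vS; apply; apply/imsetP; exists x => //.
    by rewrite !inE xa xA cxy.
  apply/forallP => x; apply/implyP => xA; apply/forallP => y; apply/implyP => yA.
  apply/implyP => /andP[cxy fxy].
  case: (eqVneq x a) => xa; case: (eqVneq y a) => ya.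
  - by rewrite xa ya.
  - subst x; rewrite eq_sym; apply: inj => //; by rewrite eq_sym.
  - by subst y; apply: inj.
  - move: fxy; rewrite !ffunE (negbTE xa) (negbTE ya) => fxy.
    have xB : x \in B by rewrite !inE xa.
    have yB : y \in B by rewrite !inE ya.
    by have := implyP (h2 x) xB => /forallP /(_ y) /implyP /(_ yB); rewrite cxy fxy; apply.
have Ssub : forall h, h \in FA y0 cls C B -> h @: S \subset C (cls a).
  move=> h; rewrite inE => /andP[/forallP h1 _].
  apply/subsetP => y /imsetP[x]; rewrite !inE => /andP[/andP[xa xA] /eqP cx] ->.
  by have := h1 x; rewrite !inE xa xA /= cx.
have cardS : forall h, h \in FA y0 cls C B -> #|h @: S| = #|S|.
  move=> h; rewrite inE => /andP[_ /forallP h2].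
  apply: card_in_imset => x y /setIdP[xB /eqP cx] /setIdP[yB /eqP cy] hxy.
  have := implyP (h2 x) xB => /forallP /(_ y) /implyP /(_ yB).
  by rewrite hxy cx cy !eqxx => /eqP.
rewrite -sum1_card (partition_big r (fun h => h \in FA y0 cls C B)) /=; last exact: rFA.
rewrite (eq_bigr (fun _ => #|C (cls a)| - #|S|)); last first.
  move=> h hh; rewrite sum1dep_card fib // card_in_imset; last first.
    move=> u w _ _ /ffunP /(_ a); by rewrite !ffunE eqxx.
  rewrite cardsD; move/setIidPr: (Ssub h hh) => ->; by rewrite cardS.
rewrite sum_nat_const (IH B hB).
rewrite (bigD1 (cls a)) //= [RHS](bigD1 (cls a)) //=.
have -> : [set x in A | cls x == cls a] = a |: S.
  apply/setP => x; rewrite !inE; case: (eqVneq x a) => [->|xa]; first by rewrite aA eqxx.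
  by [].
have -> : [set x in B | cls x == cls a] = S by [].
rewrite cardsU1 /S.
have -> : a \notin [set x in B | cls x == cls a] by rewrite in_set (negbTE aB).
rewrite add1n ffactnSr mulnAC.
congr (_ * _).
apply: eq_bigr => c ca; congr (_ ^_ _); apply: eq_card => x.
rewrite !inE; case: (eqVneq x a) => [->|xa] /=; last by [].
by rewrite eq_sym (negbTE ca) andbF.
Qed.

Lemma classinj_card (X Y K : finType) (y0 : Y) (cls : X -> K) (C : K -> {set Y}) :
  #|[set f : {ffun X -> Y} | [forall x, f x \in C (cls x)] &&
      [forall x, forall y, (cls x == cls y) && (f x == f y) ==> (x == y)]]| =
  \prod_(c : K) #|C c| ^_ #|[set x | cls x == c]|.
Proof.
have e : forall c, [set x | cls x == c] = [set x in [set: X] | cls x == c].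
  by move=> c; apply/setP => x; rewrite !inE.
under [RHS]eq_bigr => c _ do rewrite e.
rewrite -(@FA_card X Y K y0 cls C #|[set: X]| setT erefl).
apply: eq_card => f; rewrite !inE; congr (_ && _).
  by apply: eq_forallb => x; rewrite inE.
by apply: eq_forallb => x; rewrite inE /=; apply: eq_forallb => y; rewrite inE.
Qed.

Lemma count_codom (T : finType) (U : eqType) (f : T -> U) (a : pred U) :
  count a (codom f) = #|[set x | a (f x)]|.
Proof.
rewrite codomE count_map cardE /enum_mem size_filter.
rewrite count_filter; apply: eq_count => x; by rewrite /= !inE andbT.
Qed.

Lemma sum_sig (T : finType) (P : pred T) (Q : pred T) (F : T -> nat) :
  \sum_(x : {y | P y} | Q (val x)) F (val x) = \sum_(y | P y && Q y) F y.
Proof.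
rewrite (reindex_omap (fun x : {y | P y} => val x) insub) /=; last first.
  by move=> y /andP[Py _]; rewrite insubT.
apply: eq_bigl => x; by rewrite (valP x) valK eqxx andbT.
Qed.

Definition lvo n (m : 'I_n -> nat) (lam : lamT m) (x : Gvert lam) : 'I_(msum m).+1 :=
  nth ord0 (lam (val x).1 : seq _) (val x).2.

Lemma sum_Gvert n (m : 'I_n -> nat) (lam : lamT m) (i : 'I_n) (F : 'I_n -> nat -> nat) :
  0 < m i ->
  \sum_(x : Gvert lam | (val x).1 == i) F (val x).1 (val x).2 =
  \sum_(r < size (lam i : seq _)) F i r.
Proof.
move=> mi.
rewrite (sum_sig _ (fun y : 'I_n * 'I_(msum m) => y.1 == i) (fun y => F y.1 y.2)).
rewrite (eq_bigl (fun y : 'I_n * 'I_(msum m) => (y.1 == i) && (y.2 < size (lam i : seq _)))); last first.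
  move=> [a b] /=; case: eqP => [->|_]; by rewrite ?mi ?andbF ?andbT.
rewrite -(pair_big (fun a => a == i) (fun b : 'I_(msum m) => b < size (lam i : seq _)) (fun a b => F a b)) /=.
rewrite big_pred1_eq.
rewrite (big_ord_widen (msum m) (fun r => F i r) (size_bseq _)).
by rewrite (big_ord_narrow (size_bseq _)).
Qed.

Lemma count_sum_nth (T : Type) (x0 : T) (a : pred T) (s : seq T) :
  count a s = \sum_(r < size s) (a (nth x0 s r) : nat).
Proof.
rewrite -(big_mkord xpredT (fun r => (a (nth x0 s r) : nat))) -(big_nth x0 xpredT (fun y => (a y : nat))).
by elim: s => [|y s IH]; rewrite ?big_nil ?big_cons //= IH.
Qed.

Lemma sumn_sum_nth (s : seq nat) :
  sumn s = \sum_(r < size s) nth 0 s r.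
Proof.
rewrite -(big_mkord xpredT (fun r => nth 0 s r)) -(big_nth 0 xpredT (fun y => y)).
by rewrite sumnE.
Qed.

Lemma count_class n (m : 'I_n -> nat) (lam : lamT m) (i : 'I_n) (j : 'I_(msum m).+1) :
  0 < m i ->
  #|[set x : Gvert lam | ((val x).1 == i) && (lvo x == j)]| = count_mem j (lam i : seq _).
Proof.
move=> mi; rewrite -sum1dep_card big_mkcondr /=.
rewrite (eq_bigr (fun x : Gvert lam => (nth ord0 (lam (val x).1 : seq _) (val x).2 == j) : nat)); last first.
  by move=> x _; rewrite /lvo; case: (_ == j).
rewrite (@sum_Gvert _ _ lam i (fun a r => (nth ord0 (lam a : seq _) r == j) : nat) mi).
by rewrite (count_sum_nth ord0).
Qed.

Lemma sum_class n (m : 'I_n -> nat) (lam : lamT m) (i : 'I_n) :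
  0 < m i ->
  \sum_(x : Gvert lam | (val x).1 == i) (lvo x : nat) = sumn (pseq lam i).
Proof.
move=> mi.
rewrite (@sum_Gvert _ _ lam i (fun a r => (nth ord0 (lam a : seq _) r : nat)) mi).
rewrite sumn_sum_nth /pseq size_map; apply: eq_bigr => r _.
by rewrite (nth_map ord0).
Qed.


Lemma inS_part n (sp : {set 'I_n}) (m : 'I_n -> nat) (lam : lamT m) i :
  in_S sp lam -> is_partition (m i) (pseq lam i).
Proof. by move/forallP/(_ i)/andP=> []. Qed.

Lemma inS_ns n (sp : {set 'I_n}) (m : 'I_n -> nat) (lam : lamT m) i :
  in_S sp lam -> i \notin sp -> pseq lam i = nseq (m i) 1.
Proof. by move/forallP/(_ i)/andP=> [_ /implyP h] /h /eqP. Qed.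

Lemma inS_pos n (sp : {set 'I_n}) (m : 'I_n -> nat) (lam : lamT m) i (y : 'I_(msum m).+1) :
  in_S sp lam -> y \in (lam i : seq _) -> 0 < y.
Proof.
move=> /(inS_part i) /and3P[_ /allP h _] yi; apply: (h (val y)).
by rewrite /pseq map_f.
Qed.

Lemma inS_nil n (sp : {set 'I_n}) (m : 'I_n -> nat) (lam : lamT m) i :
  in_S sp lam -> m i = 0 -> (lam i : seq _) = [::].
Proof.
move=> hS mi0; have := inS_part i hS; rewrite /is_partition /pseq mi0.
case: (lam i : seq _) => [//|y s] /and3P[_ /andP[yp _]] /=.
by rewrite addn_eq0 => /andP[/eqP y0]; rewrite y0 in yp.
Qed.

Lemma lvo_mem n (m : 'I_n -> nat) (lam : lamT m) (x : Gvert lam) :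
  lvo x \in (lam (val x).1 : seq _).
Proof. by rewrite /lvo mem_nth //; case/andP: (valP x). Qed.

Lemma lvo_pos n (sp : {set 'I_n}) (m : 'I_n -> nat) (lam : lamT m) (x : Gvert lam) :
  in_S sp lam -> 0 < lvo x.
Proof. by move=> hS; apply: (inS_pos hS (lvo_mem x)). Qed.

Lemma lvo_ns n (sp : {set 'I_n}) (m : 'I_n -> nat) (lam : lamT m) (x : Gvert lam) :
  in_S sp lam -> (val x).1 \notin sp -> (lvo x : nat) = 1.
Proof.
move=> hS hsp; have := inS_ns hS hsp => e.
have : (lvo x : nat) \in pseq lam (val x).1 by rewrite /pseq map_f // lvo_mem.
by rewrite e => /nseqP [].
Qed.

Definition GT n (m : 'I_n -> nat) q := {ffun 'I_n -> {ffun 'I_q -> 'I_(msum m).+1}}.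

Definition markedP n (E : {set {set 'I_n}}) (sp : {set 'I_n}) (m : 'I_n -> nat) q
  (G : {ffun 'I_n -> {ffun 'I_q -> 'I_(msum m).+1}}) : bool :=
     [&& [forall v, \sum_(c < q) (G v c : nat) == m v],
         [forall v, (v \notin sp) ==> [forall c, (G v c : nat) <= 1]] &
         [forall e in E, ~~ [exists c, [forall v in e, 0 < (G v c : nat)]]]].

Lemma marked_countE n (E : {set {set 'I_n}}) (sp : {set 'I_n}) (m : 'I_n -> nat) q :
  marked_count E sp m q = #|[pred G | @markedP n E sp m q G]|.
Proof. by []. Qed.

Definition typ n (m : 'I_n -> nat) q (lam : lamT m) (G : GT m q) : bool :=
  [forall i, (0 < m i) ==> [forall j : 'I_(msum m).+1,
     (0 < j) ==> (#|[set c | G i c == j]| == count_mem j (lam i : seq _))]].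

Definition II n (m : 'I_n -> nat) (lam : lamT m) q (c : {ffun Gvert lam -> 'I_q}) : bool :=
  [forall x, forall y, ((val x).1 == (val y).1) && (c x == c y) ==> (x == y)].

Definition phi n (m : 'I_n -> nat) (lam : lamT m) q (c : {ffun Gvert lam -> 'I_q}) : GT m q :=
  [ffun i => [ffun col => if [pick x | ((val x).1 == i) && (c x == col)] is Some x
                          then lvo x else ord0]].

Lemma IIP n (m : 'I_n -> nat) (lam : lamT m) q (c : {ffun Gvert lam -> 'I_q}) :
  II c -> forall x y, (val x).1 = (val y).1 -> c x = c y -> x = y.
Proof.
move=> /forallP h x y e1 e2; have /forallP /(_ y) := h x.
by rewrite e1 e2 !eqxx => /eqP.
Qed.

Lemma phiP n (m : 'I_n -> nat) (lam : lamT m) q (c : {ffun Gvert lam -> 'I_q}) i col :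
  II c ->
  (exists2 x, ((val x).1 = i) /\ (c x = col) & phi c i col = lvo x) \/
  ((forall x, ~~ (((val x).1 == i) && (c x == col))) /\ phi c i col = ord0).
Proof.
move=> hI; rewrite /phi !ffunE; case: pickP => [x /andP[/eqP h1 /eqP h2]|h].
  by left; exists x.
by right; split => // x; rewrite h.
Qed.

Lemma phi_val n (m : 'I_n -> nat) (lam : lamT m) q (c : {ffun Gvert lam -> 'I_q}) x :
  II c -> phi c (val x).1 (c x) = lvo x.
Proof.
move=> hI; case: (phiP (val x).1 (c x) hI) => [[y [e1 e2] ->]|[h _]].
  by rewrite (IIP hI e1 e2).
by have := h x; rewrite !eqxx.
Qed.

Lemma phi_pt n (m : 'I_n -> nat) (lam : lamT m) q (c : {ffun Gvert lam -> 'I_q}) i col :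
  II c -> (phi c i col : nat) = \sum_(x | ((val x).1 == i) && (c x == col)) (lvo x : nat).
Proof.
move=> hI; case: (phiP i col hI) => [[x [e1 e2] ->]|[h ->]]; last by rewrite big_pred0 // => y; apply: negbTE (h y).
rewrite (bigD1 x) /=; last by rewrite e1 e2 !eqxx.
rewrite big1 ?addn0 // => y /andP[/andP[/eqP f1 /eqP f2] yx].
by move: yx; rewrite (IIP hI (etrans f1 (esym e1)) (etrans f2 (esym e2))) eqxx.
Qed.

Lemma phi_sum n (m : 'I_n -> nat) (lam : lamT m) q (c : {ffun Gvert lam -> 'I_q}) i :
  II c -> \sum_(col < q) (phi c i col : nat) = \sum_(x : Gvert lam | (val x).1 == i) (lvo x : nat).
Proof.
move=> hI; rewrite (partition_big (fun x : Gvert lam => c x) xpredT) //=.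
by apply: eq_bigr => col _; rewrite phi_pt.
Qed.

Lemma phi_typ n (sp : {set 'I_n}) (m : 'I_n -> nat) (lam : lamT m) q (c : {ffun Gvert lam -> 'I_q}) :
  in_S sp lam -> II c -> typ lam (phi c).
Proof.
move=> hS hI; apply/forallP => i; apply/implyP => mi; apply/forallP => j; apply/implyP => j0.
rewrite -(@count_class _ _ lam i j mi).
have -> : [set col | phi c i col == j] = c @: [set x | ((val x).1 == i) && (lvo x == j)].
  apply/setP => col; rewrite inE; apply/idP/imsetP.
    case: (phiP i col hI) => [[x [e1 e2] ->]|[_ ->]]; last first.
      by move/eqP => ej; rewrite -ej in j0.
    by move=> ex; exists x => //; rewrite inE e1 eqxx.
  move=> [x]; rewrite inE => /andP[/eqP e1 /eqP e2] ->.
  by rewrite -e1 phi_val // e2.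
rewrite card_in_imset //.
move=> x y; rewrite !inE => /andP[/eqP e1 _] /andP[/eqP e2 _] ecxy.
by apply: (IIP hI _ ecxy); rewrite e1 e2.
Qed.

Definition proper n (E : {set {set 'I_n}}) (m : 'I_n -> nat) (lam : lamT m) q
  (c : {ffun Gvert lam -> 'I_q}) : bool :=
  [forall e in Gedges E lam, [exists x in e, exists y in e, c x != c y]].

Lemma chromE n (E : {set {set 'I_n}}) (m : 'I_n -> nat) (lam : lamT m) q :
  chrom_count (Gedges E lam) q = #|[pred c | @proper n E m lam q c]|.
Proof. by []. Qed.

Definition edgeOK n (E : {set {set 'I_n}}) (m : 'I_n -> nat) (lam : lamT m) q
  (c : {ffun Gvert lam -> 'I_q}) : bool :=
  [forall e in E, [forall i in e, 0 < m i] ==>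
     ~~ [exists col, [forall i in e, [exists x, ((val x).1 == i) && (c x == col)]]]].

Lemma proper_II n (E : {set {set 'I_n}}) (m : 'I_n -> nat) (lam : lamT m) q
  (c : {ffun Gvert lam -> 'I_q}) : proper E c -> II c.
Proof.
move=> /forallP hp; apply/forallP => x; apply/forallP => y; apply/implyP => /andP[e1 /eqP e2].
case: (eqVneq x y) => // xy.
have : [set x; y] \in Gedges E lam.
  rewrite inE; apply/orP; left; apply/existsP; exists x; apply/existsP; exists y.
  by rewrite e1 xy eqxx.
move/(implyP (hp [set x; y])) => /existsP [u /andP[/set2P hu /existsP [v /andP[/set2P hv]]]].
by case: hu => ->; case: hv => ->; rewrite ?e2 eqxx.
Qed.

Lemma proper_edge n (E : {set {set 'I_n}}) (m : 'I_n -> nat) (lam : lamT m) q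
  (c : {ffun Gvert lam -> 'I_q}) : proper E c -> edgeOK E c.
Proof.
move=> hp; have hI := proper_II hp; move: hp => /forallP hp.
apply/forallP => e; apply/implyP => eE; apply/implyP => hpos.
apply/negP => /existsP [col /forallP H].
pose A := [set x : Gvert lam | ((val x).1 \in e) && (c x == col)].
have : A \in Gedges E lam.
  rewrite inE; apply/orP; right; apply/existsP; exists e; rewrite eE hpos /=.
  apply/andP; split.
    by apply/forallP => x; apply/implyP; rewrite inE => /andP[].
  apply/forallP => i; apply/implyP => ie.
  have /existsP [x0 /andP[/eqP h1 /eqP h2]] := implyP (H i) ie.
  suff -> : [set x in A | (val x).1 == i] = [set x0] by rewrite cards1.
  apply/setP => y; rewrite !inE.
  apply/idP/idP.
    move=> /andP[/andP[_ /eqP c1] /eqP f1]; apply/eqP.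
    by apply: (IIP hI); rewrite ?f1 ?h1 ?c1 ?h2.
  by move/eqP => ->; rewrite h1 h2 ie !eqxx.
move/(implyP (hp A)) => /existsP [u /andP[uA /existsP [v /andP[vA]]]].
by move: uA vA; rewrite !inE => /andP[_ /eqP ->] /andP[_ /eqP ->]; rewrite eqxx.
Qed.

Lemma II_edge_proper n (E : {set {set 'I_n}}) (m : 'I_n -> nat) (lam : lamT m) q
  (c : {ffun Gvert lam -> 'I_q}) : (forall e, e \in E -> e != set0) ->
  II c -> edgeOK E c -> proper E c.
Proof.
move=> hE hI /forallP hok; apply/forallP => e; apply/implyP; rewrite inE => /orP[].
  move=> /existsP [x /existsP [y /and3P[e1 xy /eqP ->]]].
  apply/existsP; exists x; rewrite set21 /=; apply/existsP; exists y; rewrite set22 /=.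
  by apply: contra xy => /eqP exy; apply/eqP; apply: (IIP hI (eqP e1) exy).
move=> /existsP [e0 /andP[e0E /and3P[hpos hsub /forallP hone]]].
case: (boolP [exists x in e, exists y in e, c x != c y]) => // hn.
have hsame : forall u v, u \in e -> v \in e -> c u = c v.
  move=> u v ue ve; apply/eqP; apply: contraNT hn => h.
  by apply/existsP; exists u; rewrite ue /=; apply/existsP; exists v; rewrite ve.
have hex : forall i, i \in e0 -> exists2 x, x \in e & (val x).1 = i.
  move=> i ie0; have := implyP (hone i) ie0 => /eqP h1.
  have : 0 < #|[set x in e | (val x).1 == i]| by rewrite h1.
  by case/card_gt0P => x; rewrite inE => /andP[xe /eqP xi]; exists x.
have /set0Pn [i0 i0e] := hE e0 e0E.
have [x0 x0e _] := hex i0 i0e.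
have := implyP (implyP (hok e0) e0E) hpos => /negP hneg; exfalso; apply: hneg.
apply/existsP; exists (c x0); apply/forallP => i; apply/implyP => ie0.
have [x xe xi] := hex i ie0.
by apply/existsP; exists x; rewrite xi eqxx /= (hsame x x0).
Qed.

Lemma Gvert_pos n (m : 'I_n -> nat) (lam : lamT m) (x : Gvert lam) : 0 < m (val x).1.
Proof. by case/andP: (valP x). Qed.

Lemma phi_marked n (E : {set {set 'I_n}}) (sp : {set 'I_n}) (m : 'I_n -> nat) (lam : lamT m) q
  (c : {ffun Gvert lam -> 'I_q}) :
  in_S sp lam -> proper E c -> @markedP n E sp m q (phi c).
Proof.
move=> hS hp; have hI := proper_II hp; have /forallP hok := proper_edge hp.
apply/and3P; split.
- apply/forallP => v; rewrite phi_sum //.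
  case: (posnP (m v)) => mv.
    rewrite big_pred0 ?mv // => x; apply/negbTE/eqP => xv.
    by have := Gvert_pos x; rewrite xv mv.
  by rewrite sum_class //; case/and3P: (inS_part v hS) => _ _ ->.
- apply/forallP => v; apply/implyP => vsp; apply/forallP => col.
  case: (phiP v col hI) => [[x [e1 e2] ->]|[_ ->] //].
  by rewrite (lvo_ns hS) // e1.
- apply/forallP => e; apply/implyP => eE; apply/negP => /existsP [col /forallP H].
  have hx : forall v, v \in e -> exists2 x : Gvert lam, (val x).1 = v & c x = col.
    move=> v ve; have := implyP (H v) ve.
    by case: (phiP v col hI) => [[x [e1 e2] _]|[_ ->] //]; exists x.
  have hpos : [forall i in e, 0 < m i].
    apply/forallP => v; apply/implyP => ve; have [x <- _] := hx v ve; exact: Gvert_pos.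
  have := implyP (implyP (hok e) eE) hpos => /negP hneg; apply: hneg.
  apply/existsP; exists col; apply/forallP => v; apply/implyP => ve.
  by have [x e1 e2] := hx v ve; apply/existsP; exists x; rewrite e1 e2 !eqxx.
Qed.

Definition PG n (m : 'I_n -> nat) (lam : lamT m) q (G : GT m q) (c : {ffun Gvert lam -> 'I_q}) :=
  [forall x, G (val x).1 (c x) == lvo x] && II c.

Lemma fiberE n (E : {set {set 'I_n}}) (sp : {set 'I_n}) (m : 'I_n -> nat) (lam : lamT m) q
  (G : GT m q) (c : {ffun Gvert lam -> 'I_q}) :
  (forall e, e \in E -> e != set0) ->
  in_S sp lam -> @markedP n E sp m q G -> typ lam G ->
  (proper E c && (phi c == G)) = PG G c.
Proof.
move=> hE hS hM hT; apply/idP/idP.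
  move=> /andP[hp /eqP <-]; have hI := proper_II hp; rewrite /PG hI andbT.
  by apply/forallP => x; rewrite phi_val.
move=> /andP[/forallP hv hI].
have phiG : phi c = G.
  apply/ffunP => i; apply/ffunP => col.
  case: (phiP i col hI) => [[x [e1 e2] ->]|[hn ->]].
    by rewrite -e1 -e2 (eqP (hv x)).
  case: (eqVneq (G i col) ord0) => [e|Gne]; first by rewrite e.
  exfalso.
  have Gpos : 0 < G i col by rewrite lt0n; apply: contra Gne => /eqP h; apply/eqP/val_inj.
  have mi : 0 < m i.
    move: hM => /and3P[/forallP /(_ i) /eqP <- _ _].
    by rewrite (bigD1 col) //= addn_gt0 Gpos.
  have /forallP /(_ i) /implyP /(_ mi) /forallP /(_ (G i col)) /implyP /(_ Gpos) /eqP hc := hT.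
  pose Cl := [set x : Gvert lam | ((val x).1 == i) && (lvo x == G i col)].
  have sub : c @: Cl \subset [set col' | G i col' == G i col].
    apply/subsetP => y /imsetP [x]; rewrite /Cl inE => /andP[/eqP e1 /eqP e2] ->.
    by rewrite inE -e1 (eqP (hv x)) e1 e2.
  have ecard : #|c @: Cl| = #|[set col' | G i col' == G i col]|.
    rewrite hc -(@count_class _ _ lam i (G i col) mi) card_in_imset //.
    move=> x y; rewrite /Cl !inE => /andP[/eqP x1 _] /andP[/eqP y1 _] exy.
    by apply: (IIP hI _ exy); rewrite x1 y1.
  have : col \in c @: Cl.
    have /eqP -> : c @: Cl == [set col' | G i col' == G i col] by rewrite eqEcard sub ecard leqnn.
    by rewrite inE.
  case/imsetP => x; rewrite /Cl inE => /andP[x1 _] ecol.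
  by have := hn x; rewrite x1 ecol eqxx.
rewrite phiG eqxx andbT; apply: II_edge_proper => //.
apply/forallP => e; apply/implyP => eE; apply/implyP => hpos.
apply/negP => /existsP [col /forallP H].
move: hM => /and3P[_ _ /forallP /(_ e) /implyP /(_ eE) /negP]; apply.
apply/existsP; exists col; apply/forallP => v; apply/implyP => ve.
have /existsP [x /andP[/eqP x1 /eqP x2]] := implyP (H v) ve.
by rewrite -x1 -x2 (eqP (hv x)) (lvo_pos _ hS).
Qed.

Lemma count_pseq n (m : 'I_n -> nat) (lam : lamT m) i (j : 'I_(msum m).+1) :
  count_mem (val j) (pseq lam i) = count_mem j (lam i : seq _).
Proof. by rewrite /pseq count_map; apply: eq_count => y; rewrite /= val_eqE. Qed.

Lemma count0_pseq n (sp : {set 'I_n}) (m : 'I_n -> nat) (lam : lamT m) i :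
  in_S sp lam -> count_mem 0 (pseq lam i) = 0.
Proof.
move=> hS; apply/count_memPn; apply/negP => h0.
by have /and3P[_ /allP /(_ 0 h0)] := inS_part i hS.
Qed.

Lemma fiber_card n (sp : {set 'I_n}) (m : 'I_n -> nat) (lam : lamT m) q (G : GT m q) :
  0 < q -> in_S sp lam -> typ lam G ->
  #|[set c | @PG n m lam q G c]| =
  \prod_(i < n | 0 < m i) \prod_(1 <= k < (msum m).+1) (count_mem k (pseq lam i))`!.
Proof.
move=> hq hS hT.
pose cls (x : Gvert lam) : 'I_n * 'I_(msum m).+1 := ((val x).1, lvo x).
pose C (k : 'I_n * 'I_(msum m).+1) := [set col | G k.1 col == k.2].
have -> : #|[set c | @PG n m lam q G c]| =
   #|[set f : {ffun Gvert lam -> 'I_q} | [forall x, f x \in C (cls x)] &&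
      [forall x, forall y, (cls x == cls y) && (f x == f y) ==> (x == y)]]|.
  apply: eq_card => f; rewrite !inE /PG; apply/andP/andP => -[/forallP h1 h2]; split.
  - by apply/forallP => x; rewrite /C inE; exact: h1 x.
  - apply/forallP => x; apply/forallP => y; apply/implyP => /andP[/eqP e1 e2].
    by apply/eqP; apply: (IIP h2); [exact: (congr1 fst e1) | exact/eqP].
  - by apply/forallP => x; have := h1 x; rewrite /C inE.
  - apply/forallP => x; apply/forallP => y; apply/implyP => /andP[e1 e2].
    have /forallP /(_ y) /implyP := (forallP h2) x; apply; rewrite e2 andbT /cls xpair_eqE e1 /=.
    have := h1 x; rewrite /C /cls inE /= => /eqP <-.
    have := h1 y; rewrite /C /cls inE /= => /eqP <-.
    by rewrite (eqP e1) (eqP e2).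
rewrite (classinj_card (Ordinal hq) cls C).
rewrite (eq_bigr (fun k => #|C (k.1, k.2)| ^_ #|[set x | cls x == (k.1, k.2)]|)); last by case.
rewrite -(pair_bigA _ (fun i j => #|C (i, j)| ^_ #|[set x | cls x == (i, j)]|)) /=.
rewrite [RHS]big_mkcond /=; apply: eq_bigr => i _.
case: (posnP (m i)) => mi /=.
  rewrite big1 // => j _.
  have -> : [set x | cls x == (i, j)] = set0.
    apply/setP => x; rewrite !inE /cls xpair_eqE; apply/negbTE; apply/negP => /andP[/eqP xi _].
    by have := Gvert_pos x; rewrite xi mi.
  by rewrite cards0 ffactn0.
rewrite (eq_bigr (fun j : 'I_(msum m).+1 => (count_mem (val j) (pseq lam i))`!)); last first.
  move=> j _.
  have -> : [set x | cls x == (i, j)] = [set x : Gvert lam | ((val x).1 == i) && (lvo x == j)].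
    by apply/setP => x; rewrite !inE /cls xpair_eqE.
  rewrite (@count_class _ _ lam i j mi) count_pseq.
  case: (posnP j) => j0.
    have -> : j = ord0 by apply: val_inj.
    by rewrite -count_pseq (count0_pseq _ hS) /= ffactn0.
  have /forallP /(_ i) /implyP /(_ mi) /forallP /(_ j) /implyP /(_ j0) /eqP := hT.
  by rewrite /C /= => ->; rewrite ffactnn.
rewrite -(big_mkord xpredT (fun k => (count_mem k (pseq lam i))`!)) big_ltn //.
by rewrite (count0_pseq _ hS) mul1n.
Qed.

Lemma m_le n (m : 'I_n -> nat) i : m i <= msum m.
Proof. by rewrite /msum (bigD1 i) //= leq_addr. Qed.

Definition Lfil n (m : 'I_n -> nat) q (G : GT m q) i : seq 'I_(msum m).+1 :=
  [seq x : 'I_(msum m).+1 <- codom (G i) | 0 < nat_of_ord x].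

Definition srt n (m : 'I_n -> nat) q (G : GT m q) i : seq 'I_(msum m).+1 :=
  sort (relpre val geq) (Lfil G i).

Definition typeOf n (m : 'I_n -> nat) q (G : GT m q) : lamT m :=
  [ffun i => insubd (@Bseq (msum m) _ [::] (leq0n _)) (srt G i)].

Lemma sumn_filter_pos (N : nat) (s : seq 'I_N) :
  sumn (map val [seq x : 'I_N <- s | 0 < nat_of_ord x]) = sumn (map val s).
Proof. by elim: s => [|x s IH] //=; case: (posnP x) => [x0|x0] /=; rewrite IH ?x0. Qed.

Lemma size_le_sumn (N : nat) (s : seq 'I_N) :
  all (fun x : 'I_N => 0 < x) s -> size s <= sumn (map val s).
Proof.
elim: s => [|x s IH] //= /andP[x0 /IH h].
by rewrite -add1n leq_add.
Qed.

Lemma sumL n (m : 'I_n -> nat) q (G : GT m q) i :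
  sumn (map val (Lfil G i)) = \sum_(c < q) (G i c : nat).
Proof.
rewrite /Lfil sumn_filter_pos codomE -map_comp sumnE big_map.
by rewrite -big_enum.
Qed.

Lemma marked_sum n (E : {set {set 'I_n}}) (sp : {set 'I_n}) (m : 'I_n -> nat) q (G : GT m q) i :
  @markedP n E sp m q G -> \sum_(c < q) (G i c : nat) = m i.
Proof. by case/and3P => /forallP /(_ i) /eqP. Qed.

Lemma Lfil_pos n (m : 'I_n -> nat) q (G : GT m q) i : all (fun x : 'I_(msum m).+1 => 0 < x) (Lfil G i).
Proof. by apply/allP => x; rewrite mem_filter => /andP[]. Qed.

Lemma typeOf_val n (E : {set {set 'I_n}}) (sp : {set 'I_n}) (m : 'I_n -> nat) q (G : GT m q) i :
  @markedP n E sp m q G -> (typeOf G i : seq _) = srt G i.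
Proof.
move=> hM; rewrite /typeOf ffunE val_insubd.
suff -> : size (srt G i) <= msum m by [].
rewrite /srt size_sort (leq_trans (size_le_sumn (Lfil_pos G i))) //.
by rewrite sumL (marked_sum i hM) m_le.
Qed.

Lemma geq_total : total geq.
Proof. by move=> a b; rewrite /geq /= leq_total. Qed.

Lemma pseq_typeOf n (E : {set {set 'I_n}}) (sp : {set 'I_n}) (m : 'I_n -> nat) q (G : GT m q) i :
  @markedP n E sp m q G -> perm_eq (pseq (typeOf G) i) (map val (Lfil G i)).
Proof.
move=> hM; rewrite /pseq (typeOf_val i hM) /srt.
by apply: perm_map; rewrite perm_sort.
Qed.

Lemma typeOf_S n (E : {set {set 'I_n}}) (sp : {set 'I_n}) (m : 'I_n -> nat) q (G : GT m q) :
  @markedP n E sp m q G -> in_S sp (typeOf G).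
Proof.
move=> hM; apply/forallP => i; have hp := pseq_typeOf i hM.
have hsum : sumn (pseq (typeOf G) i) = m i by rewrite (perm_sumn hp) sumL (marked_sum i hM).
apply/andP; split.
  apply/and3P; split; last by rewrite hsum.
    rewrite /pseq (typeOf_val i hM) /srt sorted_map.
    apply: sort_sorted => a b; exact: geq_total.
  rewrite (perm_all _ hp) all_map; apply/allP => x; rewrite mem_filter => /andP[].
  by [].
apply/implyP => isp.
have h1 : all (pred1 1) (pseq (typeOf G) i).
  rewrite (perm_all _ hp) all_map; apply/allP => x; rewrite mem_filter => /andP[x0 /codomP [c ex]]; subst x.
  move: hM => /and3P[_ /forallP /(_ i) /implyP /(_ isp) /forallP /(_ c) hc _].
  by rewrite /= eqn_leq hc.
move/all_pred1P: h1 => e; apply/eqP; rewrite e; congr nseq.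
by rewrite -hsum e sumn_nseq mul1n size_nseq.
Qed.

Lemma typeOf_typ n (E : {set {set 'I_n}}) (sp : {set 'I_n}) (m : 'I_n -> nat) q (G : GT m q) :
  @markedP n E sp m q G -> typ (typeOf G) G.
Proof.
move=> hM; apply/forallP => i; apply/implyP => mi; apply/forallP => j; apply/implyP => j0.
rewrite (typeOf_val i hM) /srt.
have hps : perm_eq (sort (relpre val geq) (Lfil G i)) (Lfil G i) by rewrite perm_sort.
rewrite (permP hps) /Lfil count_filter.
rewrite (eq_count (a2 := pred1 j)); last first.
  by move=> x /=; case: (eqVneq x j) => [->|] //=; rewrite j0.
by rewrite count_codom.
Qed.

Lemma typ_unique n (sp : {set 'I_n}) (m : 'I_n -> nat) q (G : GT m q) (lam lam' : lamT m) :
  in_S sp lam -> in_S sp lam' -> typ lam G -> typ lam' G -> lam = lam'.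
Proof.
move=> hS hS' hT hT'; apply/ffunP => i; apply: val_inj => /=.
case: (posnP (m i)) => mi; first by rewrite (inS_nil hS mi) (inS_nil hS' mi).
have hsort : forall l : lamT m, in_S sp l -> sorted (relpre val geq) (l i : seq _).
  by move=> l hl; have /and3P[+ _ _] := inS_part i hl; rewrite /pseq sorted_map.
apply: (sorted_eq _ _ (hsort _ hS) (hsort _ hS')).
- by move=> a b c /= h1 h2; apply: leq_trans h2 h1.
- by move=> a b /= h; apply: val_inj; apply/eqP; rewrite eqn_leq andbC.
apply/allP => x _ /=.
case: (posnP x) => x0.
  have -> : x = ord0 by apply: val_inj.
  by rewrite -!count_pseq !(count0_pseq _ hS) (count0_pseq _ hS').
have /forallP /(_ i) /implyP /(_ mi) /forallP /(_ x) /implyP /(_ x0) /eqP <- := hT.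
have /forallP /(_ i) /implyP /(_ mi) /forallP /(_ x) /implyP /(_ x0) /eqP <- := hT'.
by [].
Qed.

Lemma markedA n (E : {set {set 'I_n}}) (sp : {set 'I_n}) (m : 'I_n -> nat) q :
  marked_count E sp m q =
  \sum_(lam : lamT m | in_S sp lam) #|[set G : GT m q | @markedP n E sp m q G && typ lam G]|.
Proof.
rewrite marked_countE -sum1_card (partition_big (@typeOf n m q) (@in_S n sp m)) /=; last first.
  by move=> G; rewrite inE => /typeOf_S.
apply: eq_bigr => lam hl; rewrite sum1dep_card; apply: eq_card => G; rewrite !inE.
case: (boolP (markedP E sp G)) => //= hM; apply/eqP/idP => [<-|hT].
  exact: typeOf_typ hM.
exact: (typ_unique (typeOf_S hM) hl (typeOf_typ hM) hT).
Qed.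

Lemma chromB n (E : {set {set 'I_n}}) (sp : {set 'I_n}) (m : 'I_n -> nat) q (lam : lamT m) :
  (forall e, e \in E -> e != set0) -> in_S sp lam ->
  chrom_count (Gedges E lam) q =
  \sum_(G : GT m q | @markedP n E sp m q G && typ lam G) #|[set c | @PG n m lam q G c]|.
Proof.
move=> hE hS.
rewrite chromE -sum1_card (partition_big (@phi n m lam q) (fun G => @markedP n E sp m q G && typ lam G)) /=; last first.
  move=> c; rewrite inE => hp; rewrite (phi_marked hS hp) /=.
  exact: (phi_typ hS (proper_II hp)).
apply: eq_bigr => G /andP[hM hT]; rewrite sum1dep_card; apply: eq_card => c; rewrite !inE.
exact: (fiberE c hE hS hM hT).
Qed.

Unset Implicit Arguments.

Theorem proposition5p2 (n : nat) (E : {set {set 'I_n}}) (sp : {set 'I_n})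
    (m : 'I_n -> nat) (hE : forall e, e \in E -> e != set0)
    (q : nat) (hq : (0 < q)%N) :
  ((marked_count E sp m q)%:R : rat) =
  (\sum_(lam : lamT m | in_S sp lam)
     (chrom_count (Gedges E lam) q)%:R /
     (\prod_(i < n | (0 < m i)%N)
        \prod_(1 <= k < (msum m).+1) (count_mem k (pseq lam i))`!)%:R)%R.
Proof.
rewrite markedA GRing.natr_sum; apply: eq_bigr => lam hl.
rewrite (chromB q hE hl).
rewrite (eq_bigr (fun _ => \prod_(i < n | (0 < m i)%N)
        \prod_(1 <= k < (msum m).+1) (count_mem k (pseq lam i))`!)); last first.
  by move=> G /andP[_ hT]; exact: (fiber_card hq hl hT).
rewrite sum_nat_const GRing.natrM GRing.mulfK //.
  by congr (_%:R)%R; apply: eq_card => G; rewrite inE.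
rewrite Num.Theory.pnatr_eq0 -lt0n; apply: prodn_gt0 => i; apply: prodn_gt0 => k; exact: fact_gt0.
Qed.
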